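(* Suppose $\xi\star\pi\in\perp\!\!\!\perp$. Let $\xi'\star\pi'$ be obtained from $\xi\star\pi$ by replacing some occurrences of $A$ by $(\ell_u)A=k_{u\cdot\pi_0}$ and some occurrences of the variables $q_0,\dots,q_N$ by $t_0,\dots,t_N$ respectively, where $t_0,\dots,t_N,u$ are arbitrary terms. Then, for every term $t$, $\xi'\star\pi'\in\perp\!\!\!\perp$ and $\xi'\star\pi'\cdot t\in\perp\!\!\!\perp$.
   Context: Fix an integer $N\ge 0$. The set $\Lambda$ of terms is the smallest set containing the constants $B,C,I,K,W,cc,A$ and $p,q_0,\dots,q_N$, closed under application $(\xi)\eta$ (written $\xi\eta$), and containing, for each sequence $(\xi_i)_{i\in\mathbb N}$ of closed terms (no occurrence of $p,q_0,\dots,q_N$), a constant $\bigwedge_i\xi_i$ (injectively, well-founded). Stacks: finite sequences $t_0\cdot\ldots\cdot t_{n-1}\cdot\pi_0$ of terms, $\pi_0$ the empty stack; $\Pi$ the set of stacks. If $\pi=t_0\cdot\ldots\cdot t_{n-1}\cdot\pi_0$, then $\pi\cdot t$ denotes the stack $t_0\cdot\ldots\cdot t_{n-1}\cdot t\cdot\pi_0$. $\ell_t=((C)(B)CB)t$, $k_{\pi_0}=A$, $k_{t\cdot\pi}=(\ell_t)k_\pi$; $\sigma=(BW)(C)(B)BB$, $\underline0=(K)I$, $\underline{n+1}=(\sigma)\underline n$. Execution $\succ$: least preorder on $\Lambda\times\Pi$ with $(\xi)\eta\star\pi\succ\xi\star\eta\cdot\pi$; $B\star\xi\cdot\eta\cdot\zeta\cdot\pi\succ\xi\star(\eta)\zeta\cdot\pi$;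 $C\star\xi\cdot\eta\cdot\zeta\cdot\pi\succ\xi\star\zeta\cdot\eta\cdot\pi$; $I\star\xi\cdot\pi\succ\xi\star\pi$; $K\star\xi\cdot\eta\cdot\pi\succ\xi\star\pi$; $W\star\xi\cdot\eta\cdot\pi\succ\xi\star\eta\cdot\eta\cdot\pi$; $cc\star\xi\cdot\pi\succ\xi\star k_\pi\cdot\pi$; $A\star\xi\cdot\pi\succ\xi\star\pi_0$; $\bigwedge_i\xi_i\star\underline n\cdot\pi\succ\xi_n\star\pi$. Pole $\perp\!\!\!\perp=\{\xi\star\pi:\exists\varpi,\ \xi\star\pi\succ p\star\varpi\}$. *)

(* Defs.v *)
From mathcomp Require Import all_boot.
Set Implicit Arguments. Unset Strict Implicit. Unset Printing Implicit Defensive.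

Inductive cterm : Type :=
| cB | cC | cI | cK | cW | ccc | cA
| cApp of cterm & cterm
| cInf of (nat -> cterm).

(* Terms of Lambda, for a fixed N: variables q_0..q_N indexed by 'I_N.+1.
   The constant /\_i xi_i is the constructor Inf applied to a sequence of
   closed terms (hence injective and well-founded). *)
Inductive term (N : nat) : Type :=
| B | C | I | K | W | cc | A | P
| Q of 'I_N.+1
| App of term N & term N
| Inf of (nat -> cterm).

Arguments B {N}. Arguments C {N}. Arguments I {N}. Arguments K {N}.
Arguments W {N}. Arguments cc {N}. Arguments A {N}. Arguments P {N}.

Fixpoint emb (N : nat) (t : cterm) : term N :=
  match t with
  | cB => B | cC => C | cI => I | cK => K | cW => W | ccc => cc | cA => A
  | cApp a b => App (emb N a) (emb N b)
  | cInf f => Inf N f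
  end.

(* stacks t_0 . ... . t_{n-1} . pi_0 as finite lists; pi . t = rcons pi t *)
Definition stack N := seq (term N).

Definition ell N (t : term N) : term N :=
  App (App C (App (App B C) B)) t.

Fixpoint kont N (pi : stack N) : term N :=
  match pi with
  | [::] => A
  | t :: pi' => App (ell t) (kont pi')
  end.

Definition sigma N : term N := App (App B W) (App C (App (App B B) B)).

Fixpoint num N (n : nat) : term N :=
  match n with
  | 0 => App K I
  | n'.+1 => App (sigma N) (num N n')
  end.

Inductive step N : term N * stack N -> term N * stack N -> Prop :=
| st_app x y pi : step (App x y, pi) (x, y :: pi)
| st_B x y z pi : step (B, x :: y :: z :: pi) (x, App y z :: pi)
| st_C x y z pi : step (C, x :: y :: z :: pi) (x, z :: y :: pi)
| st_I x pi : step (I, x :: pi) (x, pi)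
| st_K x y pi : step (K, x :: y :: pi) (x, pi)
| st_W x y pi : step (W, x :: y :: pi) (x, y :: y :: pi)
| st_cc x pi : step (cc, x :: pi) (x, kont pi :: pi)
| st_A x pi : step (A, x :: pi) (x, [::])
| st_Inf f n pi : step (Inf N f, num N n :: pi) (emb N (f n), pi).

Inductive exec N : term N * stack N -> term N * stack N -> Prop :=
| ex_refl s : exec s s
| ex_step s1 s2 s3 : step s1 s2 -> exec s2 s3 -> exec s1 s3.

Definition pole N (xi : term N) (pi : stack N) : Prop :=
  exists varpi, exec (xi, pi) (P, varpi).

Inductive repl N (ts : 'I_N.+1 -> term N) (u : term N) : term N -> term N -> Prop :=
| repl_refl x : repl ts u x x
| repl_A : repl ts u A (App (ell u) A)
| repl_Q i : repl ts u (Q i) (ts i)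
| repl_App x y x' y' : repl ts u x x' -> repl ts u y y' ->
    repl ts u (App x y) (App x' y').

Inductive repl_stack N (ts : 'I_N.+1 -> term N) (u : term N) : stack N -> stack N -> Prop :=
| rs_nil : repl_stack ts u [::] [::]
| rs_cons x x' pi pi' : repl ts u x x' -> repl_stack ts u pi pi' ->
    repl_stack ts u (x :: pi) (x' :: pi').

(* Main.v *)
Require Import Defs.
From mathcomp Require Import all_boot.

Section S.
Variable N : nat.
Variable ts : 'I_N.+1 -> term N.

Inductive Rt : term N -> term N -> Prop :=
| Rrefl x : Rt x x
| RA rho : Rt A (kont rho)
| RQ i : Rt (Q i) (ts i)
| RApp x y x' y' : Rt x x' -> Rt y y' -> Rt (App x y) (App x' y').

Inductive Rs : stack N -> stack N -> Prop :=
| Rs_nil : Rs [::] [::]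
| Rs_cons x x' pi pi' : Rt x x' -> Rs pi pi' -> Rs (x :: pi) (x' :: pi').

Lemma exec_trans (s1 s2 s3 : term N * stack N) : exec s1 s2 -> exec s2 s3 -> exec s1 s3.
Proof. elim=> // a b c h _ IH /IH; exact: ex_step. Qed.

Lemma back (x y : term N) p q : exec (x, p) (y, q) -> pole y q -> pole x p.
Proof. move=> h [v hv]; exists v; exact: exec_trans h hv. Qed.

Lemma ell_exec t y x (s : stack N) :
  exec (App (ell t) y, x :: s) (y, App x t :: s).
Proof.
rewrite /ell.
repeat (eapply ex_step; [constructor|]); apply ex_refl.
Qed.

Lemma kont_exec rho : forall x (s : stack N), exec (kont rho, x :: s) (x, rho).
Proof.
elim: rho => [|t rho IH] x s /=.
  by eapply ex_step; [constructor|]; apply ex_refl.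
apply: exec_trans (ell_exec _ _ _ _) _.
apply: exec_trans (IH _ _) _.
by eapply ex_step; [constructor|]; apply ex_refl.
Qed.

Fixpoint noAQ (x : term N) : bool :=
  match x with
  | A => false | Q _ => false
  | App a b => noAQ a && noAQ b
  | _ => true
  end.

Lemma Rt_noAQ x y : Rt x y -> noAQ x -> y = x.
Proof.
elim=> //= a b a' b' _ IH1 _ IH2 /andP [h1 h2].
by rewrite IH1 // IH2.
Qed.

Lemma noAQ_num n : noAQ (num N n).
Proof. by elim: n. Qed.

Lemma Rt_kont pi pi' rho : Rs pi pi' -> Rt (kont pi) (kont (pi' ++ rho)).
Proof.
elim=> /= [|x x' p p' hx _ IH]; first exact: RA.
apply: RApp => //; rewrite /ell; apply: RApp => //; exact: Rrefl.
Qed.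

Lemma sim (s1 s3 : term N * stack N) : exec s1 s3 -> s3.1 = P ->
  forall xi' pi' rho, Rt s1.1 xi' -> Rs s1.2 pi' -> pole xi' (pi' ++ rho).
Proof.
elim=> {s1 s3} [[x pi] /= -> xi' pi' rho hR hS | s1 s2 s3 hst hex IH hP xi' pi' rho hR hS].
  inversion hR; subst. by exists (pi' ++ rho); apply ex_refl.
move: {IH} (IH hP) => IH.
destruct hst; simpl in *.
- inversion hR; subst.
  + apply: back (ex_step (st_app _ _ _) (ex_refl _)) _.
    apply: (IH _ (y :: pi')) => //; [exact: Rrefl | constructor => //; exact: Rrefl].
  + apply: back (ex_step (st_app _ _ _) (ex_refl _)) _.
    apply: (IH _ (y' :: pi')) => //; constructor => //.
- inversion hR; subst. inversion hS as [|? x' ? p1 hx h1]; subst.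
  inversion h1 as [|? y' ? p2 hy h2]; subst. inversion h2 as [|? z' ? p3 hz h3]; subst.
  apply: back (ex_step (st_B _ _ _ _) (ex_refl _)) _.
  apply: (IH _ (App y' z' :: p3)) => //; constructor => //; exact: RApp.
- inversion hR; subst. inversion hS as [|? x' ? p1 hx h1]; subst.
  inversion h1 as [|? y' ? p2 hy h2]; subst. inversion h2 as [|? z' ? p3 hz h3]; subst.
  apply: back (ex_step (st_C _ _ _ _) (ex_refl _)) _.
  apply: (IH _ (z' :: y' :: p3)) => //; do 2 constructor => //.
- inversion hR; subst. inversion hS as [|? x' ? p1 hx h1]; subst.
  apply: back (ex_step (st_I _ _) (ex_refl _)) _.
  exact: IH.
- inversion hR; subst. inversion hS as [|? x' ? p1 hx h1]; subst.
  inversion h1 as [|? y' ? p2 hy h2]; subst.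
  apply: back (ex_step (st_K _ _ _) (ex_refl _)) _.
  exact: IH.
- inversion hR; subst. inversion hS as [|? x' ? p1 hx h1]; subst.
  inversion h1 as [|? y' ? p2 hy h2]; subst.
  apply: back (ex_step (st_W _ _ _) (ex_refl _)) _.
  apply: (IH _ (y' :: y' :: p2)) => //; do 2 constructor => //.
- inversion hR; subst. inversion hS as [|? x' ? p1 hx h1]; subst.
  apply: back (ex_step (st_cc _ _) (ex_refl _)) _.
  apply: (IH _ (kont (p1 ++ rho) :: p1) rho) => //.
  constructor => //; exact: Rt_kont.
- inversion hR; subst; inversion hS as [|? x' ? p1 hx h1]; subst.
  + apply: back (ex_step (st_A _ _) (ex_refl _)) _.
    exact: (IH _ [::] [::] hx Rs_nil).
  + apply: back (kont_exec _ _ _) _.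
    exact: (IH _ [::] rho0 hx Rs_nil).
- inversion hR; subst. inversion hS as [|? x' ? p1 hx h1]; subst.
  rewrite (@Rt_noAQ _ _ hx (noAQ_num n)).
  apply: back (ex_step (st_Inf _ _ _) (ex_refl _)) _.
  apply: IH => //; exact: Rrefl.
Qed.

Lemma repl_Rt u x y : repl ts u x y -> Rt x y.
Proof.
elim=> *; [exact: Rrefl| exact: (RA [:: u]) | exact: RQ | exact: RApp].
Qed.

Lemma repls_Rs u p q : repl_stack ts u p q -> Rs p q.
Proof. elim=> [|x x1 p1 p2 h _ IH]; [exact: Rs_nil | apply: Rs_cons IH; exact: repl_Rt h]. Qed.

End S.

Theorem lemma3 (N : nat) (ts : 'I_N.+1 -> term N) (u : term N)
  (xi xi' : term N) (pi pi' : stack N) :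
  pole xi pi -> repl ts u xi xi' -> repl_stack ts u pi pi' ->
  forall t : term N, pole xi' pi' /\ pole xi' (rcons pi' t).
Proof.
move=> [v hv] hr hs t.
have H := fun rho => @sim N ts _ _ hv erefl xi' pi' rho (@repl_Rt N ts u _ _ hr) (@repls_Rs N ts u _ _ hs).
split; first by rewrite -[pi']cats0; exact: H.
by rewrite -cats1; exact: H.
Qed.
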